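(* Let $X$ be an infinite compact metrizable space, $h\colon X\to X$ a minimal homeomorphism, and suppose $(X,h)$ has the topological small boundary property. Then for any $N\in\mathbb{N}$ there exists a closed set $Y\subset X$ such that $\mathrm{int}(Y)\neq\varnothing$, $\overline{\mathrm{int}(Y)}=Y$, $\partial Y$ is topologically $h$-small, and the sets $Y,h(Y),\dots,h^N(Y)$ are pairwise disjoint.
   Context: $\partial A$ is the boundary of $A$. A closed set $F\subset X$ is topologically $h$-small if there is $m\in\mathbb{Z}_{+}$ such that whenever $d(0),\dots,d(m)$ are $m+1$ distinct integers, $h^{d(0)}(F)\cap\cdots\cap h^{d(m)}(F)=\varnothing$. $(X,h)$ has the topological small boundary property if whenever $F,K\subset X$ are disjoint compact sets, there exist open sets $U,V\subset X$ with $F\subset U$, $K\subset V$, $\overline{U}\cap\overline{V}=\varnothing$ and $\partial U$ topologically $h$-small. *)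

(* Defs.v *)
From HB Require Import structures.
From mathcomp Require Import all_boot all_order all_algebra.
From mathcomp Require Import all_classical all_reals all_analysis.
Set Implicit Arguments. Unset Strict Implicit. Unset Printing Implicit Defensive.
Import Order.TTheory GRing.Theory Num.Theory.
Local Open Scope classical_set_scope.
Local Open Scope ring_scope.

Section Defs.
Context {T : topologicalType}.

Definition boundary (A : set T) : set T := closure A `\` interior A.

Definition homeo (h hinv : T -> T) : Prop :=
  [/\ cancel h hinv, cancel hinv h, continuous h & continuous hinv].

Definition hpow (h hinv : T -> T) (z : int) : T -> T :=
  match z with
  | Posz n => iter n h
  | Negz n => iter n.+1 hinv
  end.

Definition minimal_homeo (h : T -> T) : Prop :=
  forall E : set T, closed E -> h @` E = E -> E = set0 \/ E = setT.

Definition top_small (h hinv : T -> T) (F : set T) : Prop :=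
  closed F /\
  exists m : nat, forall d : 'I_m.+1 -> int, injective d ->
    \bigcap_(i in [set: 'I_m.+1]) (hpow h hinv (d i) @` F) = set0.

Definition top_small_boundary (h hinv : T -> T) : Prop :=
  forall F K : set T, compact F -> compact K -> F `&` K = set0 ->
  exists U V : set T, [/\ open U, open V, F `<=` U, K `<=` V &
    closure U `&` closure V = set0] /\ top_small h hinv (boundary U).
End Defs.

(* Main.v *)
Require Import Defs.
From HB Require Import structures.
From mathcomp Require Import all_boot all_order all_algebra.
From mathcomp Require Import all_classical all_reals all_analysis.
Import Order.TTheory GRing.Theory Num.Theory.
Local Open Scope classical_set_scope.
Local Open Scope ring_scope.

Section Helpers.
Context {T : topologicalType}.

Lemma iter_cont (h : T -> T) k : continuous h -> continuous (iter k h).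
Proof.
move=> hc; elim: k => [|k IH] x /=; first exact: cvg_id.
exact: (continuous_comp (IH x) (hc _)).
Qed.

Lemma iter_injS (h hinv : T -> T) k : cancel h hinv -> injective (iter k h).
Proof.
move=> hK; elim: k => [|k IH] x y //= /(can_inj hK); exact: IH.
Qed.

Lemma sep_lemma (h : T -> T) : hausdorff_space T -> continuous h ->
  forall N x, (forall k, (0 < k <= N)%N -> iter k h x <> x) ->
  exists B : set T, [/\ open B, B x &
    forall y z k, B y -> B z -> (0 < k <= N)%N -> y <> iter k h z].
Proof.
move=> hs hc; elim=> [|N IH] x Hx.
  by exists setT; split => //; [exact: openT|] => y z k _ _ /andP[/leq_trans H /H].
have [B [oB Bx HB]] : exists B : set T, [/\ open B, B x &
    forall y z k, B y -> B z -> (0 < k <= N)%N -> y <> iter k h z].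
  apply: IH => k /andP[k0 kN]; apply: Hx; rewrite k0 /=; exact: leqW.
have : x != iter N.+1 h x by apply/eqP => E; exact: (Hx N.+1 (leqnn _)) (esym E).
move: hs; rewrite open_hausdorff => hs /hs [[A C]] /= [xA yC] [oA oC /eqP AC].
exists (B `&` A `&` (iter N.+1 h @^-1` C)); split.
- apply: openI; first exact: openI.
  by apply: open_comp => // t _; exact: iter_cont.
- by split; [split => //; rewrite -inE|rewrite /= -inE].
move=> y z k [[By Ay] _] [[Bz _] Cz] /andP[k0]; rewrite leq_eqVlt.
case/orP => [/eqP ->|kN].
  move=> E; have : (A `&` C) y by split => //; rewrite E.
  by rewrite AC.
by apply: HB => //; rewrite k0.
Qed.

End Helpers.

Theorem lemma5p4 (R : realType) (X : pseudoMetricType R)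
  (h hinv : X -> X) :
  hausdorff_space X -> compact [set: X] -> infinite_set [set: X] ->
  homeo h hinv -> minimal_homeo h -> top_small_boundary h hinv ->
  forall N : nat, exists Y : set X,
    [/\ closed Y, interior Y != set0, closure (interior Y) = Y,
        top_small h hinv (boundary Y) &
        forall i j : nat, (i <= N)%N -> (j <= N)%N -> i <> j ->
          (hpow h hinv i%:Z @` Y) `&` (hpow h hinv j%:Z @` Y) = set0].
Proof.
move=> hs cX iX [hK hinvK hc hinvc] hmin tsb N.
have [x _] : exists x : X, True.
  apply: contrapT => nx; apply: iX.
  suff -> : [set: X] = set0 by exact: finite_set0.
  by apply/seteqP; split => // t _; apply: nx; exists t.
have Hx : forall k, (0 < k)%N -> iter k h x <> x.
  move=> k k0 Ek.
  pose E := (fun i => iter i h x) @` `I_k.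
  have cE : closed E.
    have [+ _] := accessible_finite_set_closed (T:=X); apply.
      exact: hausdorff_accessible.
    by apply: finite_image; exact: finite_II.
  have hE : h @` E = E.
    apply/seteqP; split => t.
      case=> _ [i ik <-] <-.
      have : (i.+1 <= k)%N by [].
      rewrite leq_eqVlt => /orP[/eqP ik1|ik1].
        by exists 0%N => //; move: Ek; rewrite -ik1 /= => ->.
      by exists i.+1.
    case=> i ik <-; case: i ik => [|i] ik.
      exists (iter k.-1 h x); last by rewrite /= -iterS prednK.
      by exists k.-1 => //; rewrite /= prednK.
    by exists (iter i h x) => //; exists i => //; exact: ltnW.
  have E0 : E x by exists 0%N.
  case: (hmin E cE hE) => EE.
    by move: E0; rewrite EE.
  by apply: iX; rewrite -EE; apply: finite_image; exact: finite_II.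
have [B [oB Bx HB]] := sep_lemma h hs hc N x (fun k k0 => Hx k (proj1 (andP k0))).
have cK : compact (~` B).
  apply: subclosed_compact cX _ => //; by rewrite closedC.
have FK : [set x] `&` ~` B = set0.
  by rewrite -subset0 => t [/= -> nB].
have c1 : compact [set x] by exact: compact_set1.
have [U [V [[oU oV FU KV cUV] [cbU [m Hm]]]]] :=
  tsb [set x] (~` B) c1 cK FK.
exists (closure U).
have UiY : U `<=` interior (closure U).
  by rewrite -{1}(proj1 (interior_id U) oU); apply: interiorS; exact: subset_closure.
have YB : closure U `<=` B.
  move=> t Yt; case: (pselect (B t)) => // nBt; exfalso.
  have : (closure U `&` closure V) t.
    by split => //; apply: subset_closure; exact: KV.
  by rewrite cUV.
split.
- exact: closed_closure.
- by apply/set0P; exists x; apply: UiY; exact: FU.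
- apply/seteqP; split.
    rewrite {2}(proj1 (closure_id _) (closed_closure (A:=U))).
    by apply: closureS; exact: interior_subset.
  by apply: closureS.
- split.
    rewrite /boundary setDE; apply: closedI; first exact: closed_closure.
    by rewrite closedC; exact: open_interior.
  have bYU : boundary (closure U) `<=` boundary U.
    move=> t [ct nit]; split.
      by rewrite (proj1 (closure_id _) (closed_closure (A:=U))).
    by rewrite (proj1 (interior_id U) oU) => Ut; apply: nit; exact: UiY.
  exists m => d dinj; rewrite -subset0 => w Hw.
  rewrite -(Hm d dinj) => i _.
  by have [t bt <-] := Hw i I; exists t => //; exact: bYU.
- have key : forall i j y z, (i < j <= N)%N -> closure U y -> closure U z ->
      iter i h y = iter j h z -> False.
    move=> i j y z /andP[ij jN] Yy Yz.
    rewrite -(subnKC (ltnW ij)) iterD => /(iter_injS h hinv i hK) E.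
    apply: (HB y z (j - i)%N (YB _ Yy) (YB _ Yz)) => //.
    by rewrite subn_gt0 ij /= (leq_trans (leq_subr _ _) jN).
  move=> i j iN jN ij; rewrite -subset0 => w [[y Yy Ey] [z Yz Ez]].
  move: Ey Ez => /= Ey Ez.
  case: (ltngtP i j) => [lij|lji|eij] //.
  + by apply: (key i j y z) => //; [rewrite lij|rewrite Ey Ez].
  + by apply: (key j i z y) => //; [rewrite lji|rewrite Ey Ez].
Qed.
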